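(* Let $k\ge2$ and let $G=(\{a,b\},\varphi,a)$ be a circular D0L-system with $\varphi$ $k$-uniform, and suppose the graph of overhangs $GO_G$ contains two distinct vertices $s_1,s_2$ with an edge from $s_1$ to $s_2$ labelled $(\varphi(a),\varphi(a),\ell)$ and an edge from $s_2$ to $s_1$ labelled $(\varphi(b),\varphi(b),\ell)$. Let $R_{ab}=\max\{m: (ab)^m\in S(L(G))\}$, $R_{ba}=\max\{m:(ba)^m\in S(L(G))\}$ and $R_2=\min\{R_{ab},R_{ba}\}$. Then $R_2\le \frac{k-2}{2}$.
   Context: A D0L-system $G=(\mathcal{A},\varphi,w)$ has $L(G)=\{\varphi^n(w)\}$ and $S(L(G))$ the set of factors of its words. An interpretation of $u\in S(L(G))$ is $(p,v,s)$ with $v\in S(L(G))$, $\varphi(v)=pus$. With $v=v_1\cdots v_n$, $v'=v'_1\cdots v'_m$, $u=u_1\cdots u_\ell$, interpretations $(p,v,s),(p',v',s')$ are synchronized at position $j$ if $\varphi(v_1\cdots v_i)=pu_1\cdots u_j$ and $\varphi(v'_1\cdots v'_{i'})=p'u_1\cdots u_j$ for some $i,i'$; $u$ has a synchronizing point at $j$ if all its interpretations are pairwise synchronized at $j$. A PD0L-system injective on $S(L(G))$ is circular if there is $Z$ such that every $u\in S(L(G))$ with $|u|>Z$ has a synchronizing point. $\varphi$ is $k$-uniform if $|\varphi(a)|=|\varphi(b)|=k$. Let $X=\{\varphi(a),\varphi(b)\}$. An overhang is a triple $(u_1\cdots u_m,v_1\cdots v_n,|x|)$ with $u_i,v_j\in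 X$, $x$ nonempty, such that: (i) $x$ is a suffix of $u_1\cdots u_m$ but not of $u_2\cdots u_m$; (ii) $x$ is a prefix of $v_1\cdots v_n$ but not of $v_1\cdots v_{n-1}$; (iii) $x\ne u_1\cdots u_m$ or $x\ne v_1\cdots v_n$; (iv) $|v_1\cdots v_{n-1}|<|x(u_2\cdots u_m)^{-1}|$. Its left overhang is $u_1\cdots u_mx^{-1}$, right overhang $x^{-1}v_1\cdots v_n$. $GO_G$ has an edge from $s_1$ to $s_2$ labelled by each overhang with left overhang $s_1$ and right overhang $s_2$. *)

(* Defs.v *)
From mathcomp Require Import all_boot.
Set Implicit Arguments. Unset Strict Implicit. Unset Printing Implicit Defensive.

Definition la : bool := false.
Definition lb : bool := true.

Definition phiw (phi : bool -> seq bool) (w : seq bool) : seq bool :=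
  flatten (map phi w).

(* w \in S(L(G)) for G = ({a,b}, phi, a): w is a factor of some phi^n(a) *)
Definition inS (phi : bool -> seq bool) (w : seq bool) : Prop :=
  exists n, infix w (iter n (phiw phi) [:: la]).

Definition interp phi (u p v s : seq bool) : Prop :=
  inS phi v /\ phiw phi v = p ++ u ++ s.

Definition sync_at phi (u p v p' v' : seq bool) (j : nat) : Prop :=
  (exists i, phiw phi (take i v) = p ++ take j u) /\
  (exists i', phiw phi (take i' v') = p' ++ take j u).

Definition sync_point phi (u : seq bool) (j : nat) : Prop :=
  forall p v s p' v' s',
    interp phi u p v s -> interp phi u p' v' s' -> sync_at phi u p v p' v' j.

Definition circular (phi : bool -> seq bool) : Prop :=
  (forall x, phi x != [::]) /\
  (forall v w, inS phi v -> inS phi w -> phiw phi v = phiw phi w -> v = w) /\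
  exists Z : nat, forall u, inS phi u -> Z < size u ->
    exists j, j <= size u /\ sync_point phi u j.

Definition uniform (phi : bool -> seq bool) (k : nat) : Prop :=
  forall x, size (phi x) = k.

Definition inX (phi : bool -> seq bool) (w : seq bool) : bool :=
  (w == phi la) || (w == phi lb).

(* (u_1..u_m, v_1..v_n, l) is an overhang, with us = [u_1;..;u_m], vs = [v_1;..;v_n] *)
Definition is_overhang phi (us vs : seq (seq bool)) (l : nat) : Prop :=
  us != [::] /\ vs != [::] /\ all (inX phi) us /\ all (inX phi) vs /\
  exists x : seq bool, size x = l /\ x != [::] /\
    (suffix x (flatten us) /\ ~~ suffix x (flatten (behead us))) /\
    (prefix x (flatten vs) /\ ~~ prefix x (flatten (take (size vs).-1 vs))) /\
    (x != flatten us \/ x != flatten vs) /\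
    size (flatten (take (size vs).-1 vs)) < size x - size (flatten (behead us)).

Definition left_overhang (us : seq (seq bool)) (l : nat) : seq bool :=
  take (size (flatten us) - l) (flatten us).

Definition right_overhang (vs : seq (seq bool)) (l : nat) : seq bool :=
  drop l (flatten vs).

Definition GO_edge phi (s1 s2 : seq bool) (U V : seq bool) (l : nat) : Prop :=
  exists us vs, flatten us = U /\ flatten vs = V /\ is_overhang phi us vs l /\
    left_overhang us l = s1 /\ right_overhang vs l = s2.

Definition pow_ab (m : nat) : seq bool := flatten (nseq m [:: la; lb]).
Definition pow_ba (m : nat) : seq bool := flatten (nseq m [:: lb; la]).

(* Main.v *)
Require Import Defs.
From mathcomp Require Import all_boot.
From mathcomp Require Import zify.
Set Implicit Arguments. Unset Strict Implicit. Unset Printing Implicit Defensive.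


Lemma phiw_cat phi u v : phiw phi (u ++ v) = phiw phi u ++ phiw phi v.
Proof. by rewrite /phiw map_cat flatten_cat. Qed.

Lemma phiw_cons phi c v : phiw phi (c :: v) = phi c ++ phiw phi v.
Proof. by []. Qed.

Lemma size_phiw phi k w : uniform phi k -> size (phiw phi w) = size w * k.
Proof.
move=> hu; elim: w => [|c w IH] //=.
by rewrite phiw_cons size_cat IH hu mulSn.
Qed.

Lemma nth_phiw phi k w q j : uniform phi k -> q < size w -> j < k ->
  nth false (phiw phi w) (q * k + j) = nth false (phi (nth false w q)) j.
Proof.
move=> hu; elim: w q => [|c w IH] [|q] //= hq hj.
  by rewrite phiw_cons nth_cat hu hj.
rewrite phiw_cons nth_cat hu mulSn -addnA.
have -> : (k + (q * k + j) < k) = false by lia.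
by rewrite (addKn k) IH.
Qed.

Lemma inS_infix phi u w : inS phi w -> infix u w -> inS phi u.
Proof. by move=> [n hn] h; exists n; exact: infix_trans h hn. Qed.

Lemma infix_phiw phi u w : infix u w -> infix (phiw phi u) (phiw phi w).
Proof.
move/infixP=> [s [s' ->]]; apply/infixP; exists (phiw phi s), (phiw phi s').
by rewrite !phiw_cat.
Qed.

Lemma inS_phi phi w : inS phi w -> inS phi (phiw phi w).
Proof. by move=> [n hn]; exists n.+1; rewrite iterS; exact: infix_phiw. Qed.

Lemma size_pow_ab m : size (pow_ab m) = 2 * m.
Proof. by elim: m => //= m IH; rewrite IH; lia. Qed.

Lemma nth_pow_ab m i : i < 2 * m -> nth false (pow_ab m) i = odd i.
Proof.
elim: m i => [|m IH] [|[|i]] //= h.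
rewrite IH //; lia.
Qed.


Lemma edge_facts phi k s1 s2 c l : uniform phi k ->
  GO_edge phi s1 s2 (phi c) (phi c) l ->
  [/\ 0 < l, l < k,
     (forall i, i < l -> nth false (phi c) i = nth false (phi c) (k - l + i)),
     s1 = take (k - l) (phi c) & s2 = drop l (phi c)].
Proof.
move=> hu [us [vs [hU [hV [hO [hL hR]]]]]].
move: hO => [_ [_ [_ [_ [x [hx [hx0 [[hsuf _] [[hpre _] [hne _]]]]]]]]]].
rewrite hU in hsuf hne hL; rewrite hV in hpre hne hR.
have hA := hu c.
have hxA : x != phi c by case: hne.
move: hsuf; rewrite suffixE hA hx => /eqP hsuf.
move: hpre; rewrite prefixE hx => /eqP hpre.
have l0 : 0 < l by rewrite -hx lt0n size_eq0.
have lk : l < k.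
  case: (ltnP l k) => // h; exfalso.
  have e : k - l = 0 by lia.
  by move: hsuf; rewrite e drop0 => E; rewrite E eqxx in hxA.
split => //.
- move=> i hi.
  by rewrite -(nth_take _ hi) hpre -hsuf nth_drop.
- by rewrite -hL /left_overhang hU hA.
- by rewrite -hR /right_overhang hV.
Qed.


Lemma Fcore (A B : seq bool) k l :
  0 < l -> l < k -> size A = k -> size B = k ->
  (forall i, i < l -> nth false A i = nth false A (k - l + i)) ->
  (forall i, i < l -> nth false B i = nth false B (k - l + i)) ->
  (forall i, i < k - l -> nth false B i = nth false A (l + i)) ->
  (forall i, i < k - l -> nth false A i = nth false B (l + i)) ->
  (exists2 i, i < k - l & nth false A i != nth false B i) ->
  let d := k - l in let F := fun n => nth false A (n %% d) in
  0 < d /\ ~~ odd d /\ (forall n, F (n + d) = F n) /\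
      (forall i, i < k -> nth false A i = F i) /\
      (forall i, i < k -> nth false B i = F (l + i)) /\
      (forall n, F (n + 2 * l) = F n) /\
      (exists2 i, i < d & F i != F (l + i)).
Proof.
move=> l0 lk sA sB E1 E2 E3 E4 [i0 hi0 E5] d F.
have d0 : 0 < d by rewrite /d; lia.
have Fd n : F (n + d) = F n by rewrite /F modnDr.
have Fmd n c : F (n + c * d) = F n by rewrite /F addnC modnMDl.
have FA i : i < k -> nth false A i = F i.
  elim/ltn_ind: i => i IH hi.
  case: (ltnP i d) => hid; first by rewrite /F modn_small.
  have e : i = (i - d) + d by lia.
  rewrite e Fd -IH; try lia.
  by rewrite (E1 (i - d)) /d; [congr nth; lia | rewrite /d in hid; lia].
have FB i : i < k -> nth false B i = F (l + i).
  elim/ltn_ind: i => i IH hi.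
  case: (ltnP i d) => hid; first by rewrite E3 // FA //; lia.
  have e : i = (i - d) + d by lia.
  rewrite {2}e addnA Fd -IH; try lia.
  by rewrite (E2 (i - d)) /d; [congr nth; lia | rewrite /d in hid; lia].
have F2l n : F (n + 2 * l) = F n.
  have hr : n %% d < d by rewrite ltn_mod.
  have -> : F n = F (n %% d) by rewrite /F modn_mod.
  have -> : F (n + 2 * l) = F (n %% d + 2 * l) by rewrite /F modnDml.
  move: hr; set r := n %% d => hr.
  have hr' : r < k by move: hr; rewrite /d; lia.
  rewrite -(FA r) // (E4 r) // FB; last by move: hr; rewrite /d; lia.
  congr F; lia.
have deven : ~~ odd d.
  apply/negP => od.
  have F2lc n c : F (n + c * (2 * l)) = F n.
    elim: c n => [|c IH] n; first by rewrite mul0n addn0.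
    by rewrite mulSn addnA IH F2l.
  have : F i0 = F (l + i0).
    have e : d = 2 * d./2 + 1.
      by rewrite -{1}(odd_double_half d) od addnC -muln2 mulnC.
    move: (d./2) e => h e.
    rewrite -(Fmd i0 l).
    have -> : l + i0 = i0 + l by lia.
    rewrite -(F2lc (i0 + l) h).
    congr F; rewrite e; nia.
  move/eqP; rewrite -FA; last by lia.
  by rewrite -FB ?(negbTE E5) //; lia.
do 6 (split => //).
exists i0 => //. have h1 : i0 < k by lia. by rewrite -(FA i0 h1) -(FB i0 h1).
Qed.


Lemma altF (F : nat -> bool) a L :
  (forall i, i.+1 < L -> F (a + i.+1) = ~~ F (a + i)) ->
  forall i, i < L -> F (a + i) = F a (+) odd i.
Proof.
move=> h; elim=> [|i IH] hi; first by rewrite addn0 addbF.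
by rewrite h // IH ?(ltnW hi) //= addbN.
Qed.

Lemma FW (F : nat -> bool) d a : 0 < d -> ~~ odd d ->
  (forall n, F (n + d) = F n) ->
  (forall i, i.+1 < d -> F (a + i.+1) = ~~ F (a + i)) ->
  forall n, F n.+1 = ~~ F n.
Proof.
move=> d0 de Fd h n.
have Fmd m c : F (m + c * d) = F m.
  elim: c m => [|c IH] m; first by rewrite mul0n addn0.
  by rewrite mulSn addnA IH Fd.
have hA := altF h.
set m := n + a * d - a.
have e1 : n + a * d = a + m by rewrite /m; nia.
have e2 : n.+1 + a * d = a + m.+1 by rewrite /m; nia.
have G x : F (a + x) = F a (+) odd x.
  have -> : a + x = (a + x %% d) + x %/ d * d.
    by rewrite {1}(divn_eq x d); set q := x %/ d; set r := x %% d; lia.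
  rewrite Fmd.
  rewrite hA ?ltn_mod //.
  by rewrite {2}(divn_eq x d) oddD oddM (negbTE de) andbF.
rewrite -(Fmd n a) -(Fmd n.+1 a) e1 e2 !G /=.
by rewrite addbN.
Qed.

Lemma Fwin phi k l d (F : nat -> bool) w P N0 :
  uniform phi k -> 0 < l -> d + l = k -> 0 < d ->
  ~~ odd d -> (forall n, F (n + d) = F n) -> (forall n, F (n + 2 * l) = F n) ->
  (forall c i, i < k -> nth false (phi c) i = F ((if c then l else 0) + i)) ->
  d <= N0 -> N0 <= k -> (N0 = k \/ (odd k /\ N0.+1 = k)) -> P + N0 <= size w * k ->
  (forall i, i.+1 < N0 ->
     nth false (phiw phi w) (P + i.+1) = ~~ nth false (phiw phi w) (P + i)) ->
  forall n, F n.+1 = ~~ F n.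
Proof.
move=> hu l0 hk d0 de Fd F2l Fphi dN Nk hN hPN halt.
set W := phiw phi w in halt.
have k0 : 0 < k by lia.
set q := P %/ k; set s' := P %% k.
have hP : P = q * k + s' by rewrite /q /s' -divn_eq.
have hs' : s' < k by rewrite /s' ltn_mod.
have hq : q < size w.
  rewrite -(ltn_pmul2r k0); lia.
set c1 := nth false w q.
set o1 := if c1 then l else 0.
have G1 i : s' + i < k -> nth false W (P + i) = F (o1 + (s' + i)).
  move=> h; rewrite hP -addnA /W nth_phiw //; exact: Fphi.
case: (leqP (s' + N0) k) => hsN.
  apply: (@FW F d (o1 + s')) => // i hi.
  rewrite -!addnA -!G1; try lia.
  apply: halt; lia.
have hq1 : q.+1 < size w.
  rewrite -(ltn_pmul2r k0) mulSn; lia.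
set c2 := nth false w q.+1.
set o2 := if c2 then l else 0.
have G2 i : k <= s' + i -> i < N0 -> nth false W (P + i) = F (o2 + (s' + i - k)).
  move=> h1 h2.
  have -> : P + i = q.+1 * k + (s' + i - k) by rewrite hP mulSn; lia.
  rewrite /W nth_phiw //; last lia. apply: Fphi; lia.
case: (eqVneq c1 c2) => hc; last first.
  have Gc i : i < N0 -> nth false W (P + i) = F (o1 + s' + i).
    move=> hi; case: (ltnP (s' + i) k) => h; first by rewrite G1 // addnA.
    rewrite G2 // /o1 /o2.
    have [[-> ->]|[-> ->]] : (c1 = false /\ c2 = true) \/ (c1 = true /\ c2 = false).
      by move: hc; case: (c1); case: (c2); auto.
      by rewrite -(Fd (l + (s' + i - k))); congr F; lia.
    rewrite -(F2l (0 + (s' + i - k))) -(Fd (0 + (s' + i - k) + 2 * l)).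
    congr F; lia.
  apply: (@FW F d (o1 + s')) => // i hi.
  rewrite -!Gc; try lia.
  apply: halt; lia.
have G2' i : k <= s' + i -> i < N0 -> nth false W (P + i) = F (o1 + (s' + i - k)).
  by move=> h1 h2; rewrite G2 // /o2 /o1 hc.
case: (leqP (s' + d) k) => h1.
  apply: (@FW F d (o1 + s')) => // i hi.
  rewrite -!addnA -!G1; try lia.
  apply: halt; lia.
case: (leqP d (s' + N0 - k)) => h2.
  apply: (@FW F d o1) => // i hi.
  have e1 : F (o1 + i) = nth false W (P + (k - s' + i)).
    by rewrite G2'; [congr F; lia | lia | lia].
  have e2 : F (o1 + i.+1) = nth false W (P + (k - s' + i).+1).
    by rewrite G2'; [congr F; lia | lia | lia].
  rewrite e1 e2; apply: halt; lia.
case: hN => [eN | [ok eN]].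
  apply: (@FW F d (o1 + s')) => // i hi.
  case: (ltnP (s' + i.+1) k) => h3.
    rewrite -!addnA -!G1; try lia.
    apply: halt; lia.
  have e1 : F (o1 + s' + i) = nth false W (P + (i + l)).
    rewrite G2'; [|lia|lia].
    rewrite -(Fd (o1 + (s' + (i + l) - k))); congr F; lia.
  have e2 : F (o1 + s' + i.+1) = nth false W (P + (i + l).+1).
    rewrite G2'; [|lia|lia].
    rewrite -(Fd (o1 + (s' + (i + l).+1 - k))); congr F; lia.
  rewrite e1 e2; apply: halt; lia.
exfalso.
have lodd : odd l.
  by move: ok; rewrite -hk oddD (negbTE de).
set s := k - s'.
have hA : forall i, i < s -> F (o1 + s' + i) = F (o1 + s') (+) odd i.
  apply: altF => i hi.
  rewrite -!addnA -!G1; try lia.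
  apply: halt; lia.
have c1' := halt (s - 1).
have e1 : nth false W (P + (s - 1).+1) = F o1.
  rewrite G2'; [congr F; lia | lia | lia].
have e2 : nth false W (P + (s - 1)) = F (o1 + s') (+) odd (s - 1).
  rewrite -hA; last lia.
  rewrite G1; [congr F; lia | lia].
have e3 : F o1 = F (o1 + s') (+) odd (s - l).
  rewrite -hA; last lia.
  rewrite -(Fd o1); congr F; lia.
have e4 : odd (s - 1) = odd (s - l).
  have -> : s - 1 = (s - l) + (l - 1) by lia.
  rewrite oddD.
  have ol : odd (l - 1) = false.
    by move: lodd; rewrite -{1}(subnK l0) addn1 /=; case: (odd (l - 1)).
  by rewrite ol addbF.
have hs1 : (s - 1).+1 < N0 by lia.
move: (c1' hs1); rewrite e1 e2 e4 -e3.
by case: (F o1).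
Qed.


Definition altw (x : bool) (w : seq bool) :=
  forall i, i < size w -> nth false w i = x (+) odd i.

Lemma altw_eq x u v : altw x u -> altw x v -> size u = size v -> u = v.
Proof.
move=> hu hv hs; apply: (eq_from_nth (x0 := false)) => // i hi.
by rewrite hu // hv // -hs.
Qed.

Lemma altw_drop x w n : altw x w -> altw (x (+) odd n) (drop n w).
Proof.
move=> h i; rewrite size_drop => hi.
rewrite nth_drop h; last lia.
by rewrite oddD addbA.
Qed.

Lemma altw_take x w n : altw x w -> altw x (take n w).
Proof.
move=> h i; rewrite size_take; case: (ltnP n (size w)) => hn hi.
  rewrite nth_take; [apply: h; lia | lia].
rewrite nth_take; [apply: h; lia | lia].
Qed.

Lemma altw_phiw phi k a x w : uniform phi k -> odd k ->
  (forall c i, i < k -> nth false (phi c) i = (a (+) c) (+) odd i) ->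
  altw x w -> altw (a (+) x) (phiw phi w).
Proof.
move=> hu ko hphi h i; rewrite (size_phiw _ hu) => hi.
have k0 : 0 < k by case: k ko hu hphi hi.
have hj : i %% k < k by rewrite ltn_mod.
have hq : i %/ k < size w by rewrite ltn_divLR.
rewrite {1}(divn_eq i k) nth_phiw // hphi // h //.
rewrite {3}(divn_eq i k) oddD oddM ko andbT.
by case: (a); case: (x); case: (odd (i %/ k)); case: (odd (i %% k)).
Qed.


Lemma nonsync phi k a : 2 <= k -> uniform phi k -> circular phi -> odd k ->
  (forall c i, i < k -> nth false (phi c) i = (a (+) c) (+) odd i) ->
  (forall n, exists x v, [/\ altw x v, inS phi v & n < size v]) -> False.
Proof.
move=> hk hu [_ [_ [Z hZ]]] ko hphi grow.
have [x [v [hv hvS hsz]]] := grow Z.+1.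
set v1 := drop 1 v.
set u := phiw phi v1.
have hv1S : inS phi v1.
  apply: (inS_infix hvS); apply/infixP; exists (take 1 v), [::].
  by rewrite cats0 cat_take_drop.
have su : size u = (size v - 1) * k by rewrite /u (size_phiw _ hu) size_drop.
have hZu : Z < size u.
  have : size v - 1 <= (size v - 1) * k by rewrite leq_pmulr //; lia.
  rewrite su; lia.
have [j [hj hsp]] := hZ u (inS_phi hv1S) hZu.
set W := phiw phi v.
have sW : size W = size v * k by rewrite /W (size_phiw _ hu).
set p2 := take 1 W.
set s2 := drop (size u) (drop 1 W).
have I1 : interp phi u [::] v1 [::] by split => //; rewrite cats0.
have hu1 : take (size u) (drop 1 W) = u.
  apply: (@altw_eq ((a (+) x) (+) odd 1)).
  - apply: altw_take; apply: altw_drop; exact: (altw_phiw hu ko hphi hv).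
  - rewrite -addbA; apply: (altw_phiw hu ko hphi); exact: altw_drop.
  - rewrite size_takel // size_drop sW su mulnBl mul1n; lia.
have I2 : interp phi u p2 v s2.
  split => //.
  by rewrite /p2 /s2 -{1}hu1 !cat_take_drop.
have [[i hi] [i' hi']] := hsp _ _ _ _ _ _ I1 I2.
have e1 : size (take i v1) * k = j.
  by rewrite -(size_phiw _ hu) hi /= size_takel.
have e2 : size (take i' v) * k = 1 + j.
  rewrite -(size_phiw _ hu) hi' size_cat size_takel // /p2 size_takel //.
  by rewrite sW muln_gt0; apply/andP; split; lia.
move: e1 e2; set A1 := size (take i v1); set A2 := size (take i' v) => e1 e2.
case: (leqP A2 A1) => h.
  have : A2 * k <= A1 * k by rewrite leq_mul2r h orbT.
  lia.
have : A1.+1 * k <= A2 * k by rewrite leq_mul2r h orbT.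
rewrite mulSn; lia.
Qed.


Unset Implicit Arguments.

Theorem mainTheorem11 (phi : bool -> seq bool) (k : nat) (s1 s2 : seq bool) (l : nat) :
  2 <= k -> uniform phi k -> circular phi ->
  s1 != s2 ->
  GO_edge phi s1 s2 (phi la) (phi la) l ->
  GO_edge phi s2 s1 (phi lb) (phi lb) l ->
  (forall m, inS phi (pow_ab m) -> 2 * m <= k - 2) \/
  (forall m, inS phi (pow_ba m) -> 2 * m <= k - 2).
Proof.
move=> hk hu hc hne ed1 ed2.
left => m hm.
case: (leqP (2 * m) (k - 2)) => // hbig; exfalso.
have [l0 lk E1 hs1a hs2a] := edge_facts hu ed1.
have [_ _ E2 hs2b hs1b] := edge_facts hu ed2.
set A := phi la in E1 hs1a hs2a hs1b.
set B := phi lb in E2 hs2b hs1b hs2a.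
have E3 : forall i, i < k - l -> nth false B i = nth false A (l + i).
  by move=> i hi; rewrite -(nth_take _ hi) -hs2b hs2a nth_drop.
have E4 : forall i, i < k - l -> nth false A i = nth false B (l + i).
  by move=> i hi; rewrite -(nth_take _ hi) -hs1a hs1b nth_drop.
have E5 : exists2 i, i < k - l & nth false A i != nth false B i.
  case: (boolP (has (fun i => nth false A i != nth false B i) (iota 0 (k - l)))).
    by move/hasP => [i]; rewrite mem_iota add0n => /andP [_ hi] h; exists i.
  move/hasPn => h; exfalso; move/eqP: hne; apply.
  rewrite hs1a hs2b; apply: (eq_from_nth (x0 := false)).
    by rewrite !size_take /A /B !hu.
  move=> i; rewrite size_take /A hu => hi.
  have hi' : i < k - l by move: hi {h}; case: (ltnP (k - l) k) => hh //; lia.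
  rewrite !nth_take //.
  by apply/eqP; rewrite -[_ == _]negbK; apply: h; rewrite mem_iota add0n.
have := Fcore l0 lk (hu la) (hu lb) E1 E2 E3 E4 E5.
move=> /= [d0 [de [Fd [FA [FB [F2l E5F]]]]]].
set F := fun n => nth false (phi la) (n %% (k - l)).
have Fd' : forall n, F (n + (k - l)) = F n := Fd.
have F2l' : forall n, F (n + 2 * l) = F n := F2l.
have Fphi : forall c i, i < k -> nth false (phi c) i = F ((if c then l else 0) + i).
  by case=> i hi; [exact: FB | exact: FA].
have hm' := hm.
have m1 : 0 < m by lia.
move: hm => [n hn].
case: n hn => [|n] hn.
  by move/size_infix: hn; rewrite size_pow_ab /=; lia.
rewrite iterS in hn.
set w := iter n (phiw phi) [:: la] in hn.
move/infixP: hn => [s [s' hW]].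
have hnth i : i < 2 * m -> nth false (phiw phi w) (size s + i) = odd i.
  move=> hi; rewrite hW nth_cat ltnNge leq_addr /= addKn nth_cat size_pow_ab hi.
  exact: nth_pow_ab.
have hsz : size s + 2 * m <= size w * k.
  by rewrite -(size_phiw _ hu) hW !size_cat size_pow_ab leq_add2l leq_addr.
have [N0 [hdN hNk hN hNm]] : exists N0, [/\ k - l <= N0, N0 <= k,
    (N0 = k \/ (odd k /\ N0.+1 = k)) & N0 <= 2 * m].
  case ko: (odd k).
    by exists k.-1; split; try lia; right; split => //; lia.
  have e := odd_double_half k; rewrite ko add0n -muln2 in e.
  by exists k; split; try lia; left.
have Falt : forall n, F n.+1 = ~~ F n.
  apply: (@Fwin phi k l (k - l) F w (size s) N0) => //; try lia.
  by move=> i hi; rewrite !hnth; try lia.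
have Fall : forall n, F n = F 0 (+) odd n.
  elim=> [|n' IH]; first by rewrite addbF.
  by rewrite Falt IH /= addbN.
have lodd : odd l.
  have E5F' : exists2 i, i < k - l & F i != F (l + i) := E5F.
  move: E5F' => [i _]; rewrite (Fall i) (Fall (l + i)) oddD.
  by case: (odd l); case: (F 0); case: (odd i).
have kodd : odd k.
  have -> : k = (k - l) + l by lia.
  by rewrite oddD (negbTE de) lodd.
have hphi : forall c i, i < k -> nth false (phi c) i = (F 0 (+) c) (+) odd i.
  move=> c i hi; rewrite Fphi // (Fall (_ + i)) oddD.
  by case: c => /=; rewrite ?lodd; case: (F 0); case: (odd i).
apply: (nonsync hk hu hc kodd hphi).
elim=> [|n' [x [v [hv hvS hn']]]].
  exists false, (pow_ab m); split => //; last by rewrite size_pow_ab; lia.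
  by move=> i; rewrite size_pow_ab => hi; rewrite nth_pow_ab.
exists (F 0 (+) x), (phiw phi v); split.
- exact: (altw_phiw hu kodd hphi hv).
- exact: inS_phi.
- rewrite (size_phiw _ hu).
  have : size v * 2 <= size v * k by rewrite leq_mul2l hk orbT.
  lia.
Qed.
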